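(* Let $q\ge 3$ be a prime power and $1\le d\le e$. For all $0\le i\le d-1$ and $1\le j\le d$, $$|B_j(i)|>|B_j(i+1)|.$$
   Context: For integers $m\ge 0$ and $l$, ${m\brack l}=\prod_{t=1}^{l}\frac{q^{m-t+1}-1}{q^t-1}$ for $l\ge0$ and $0$ for $l<0$. For $0\le i,j\le d$, $$B_j(i)=\sum_{h=0}^{\min\{j,d-i\}}(-1)^{j-h}q^{eh+\binom{j-h}{2}}{d-h\brack d-j}{d-i\brack h};$$ these are the eigenvalues of the bilinear forms graph $H_q(d,e,j)$ (vertices: $d\times e$ matrices over $\mathbb F_q$, adjacent iff their difference has rank $j$). *)

(* Defs.v *)
From mathcomp Require Import all_boot all_order all_algebra.
Set Implicit Arguments. Unset Strict Implicit. Unset Printing Implicit Defensive.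
Import Order.TTheory GRing.Theory Num.Theory.
Local Open Scope ring_scope.

(* The exponent m-t+1 is written
   m.+1 - t (equal to m-t+1 whenever t <= m+1; when t > m+1 the product
   already contains the zero factor at t = m+1, so the value is unaffected). *)
Definition gbin (q m l : nat) : rat :=
  \prod_(1 <= t < l.+1) (((q ^ (m.+1 - t))%:R - 1) / ((q ^ t)%:R - 1)).

(* B_j(i) for the bilinear forms graph H_q(d,e,j). *)
Definition B (q d e j i : nat) : rat :=
  \sum_(0 <= h < (minn j (d - i)).+1)
    (-1) ^+ (j - h) * (q ^ (e * h + 'C(j - h, 2)))%:R
      * gbin q (d - h) (d - j) * gbin q (d - i) h.

Definition prime_power (q : nat) : Prop :=
  exists p k : nat, prime p /\ (0 < k)%N /\ q = (p ^ k)%N.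

(* Main.v *)
Require Import Defs.
From mathcomp Require Import all_boot all_order all_algebra.
From mathcomp Require Import ring lra zify.
Import Order.TTheory GRing.Theory Num.Theory.
Local Open Scope ring_scope.

Lemma gbin0 q m : gbin q m 0 = 1.
Proof. by rewrite /gbin big_geq. Qed.

Lemma gbinS q m l : gbin q m l.+1 =
  gbin q m l * (((q ^ (m - l))%:R - 1) / ((q ^ l.+1)%:R - 1)).
Proof. by rewrite /gbin big_nat_recr //= subSS. Qed.

Lemma gbinS_l q m l : (1 < q)%N ->
  gbin q m l.+1 * ((q ^ l.+1)%:R - 1) = gbin q m l * ((q ^ (m - l))%:R - 1).
Proof.
move=> hq; rewrite gbinS -mulrA divfK //.
rewrite subr_eq0 pnatr_eq1 -(expn0 q) eqn_exp2l //; lia.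
Qed.

Lemma gbinS_m q m l :
  gbin q m.+1 l * ((q ^ (m.+1 - l))%:R - 1) = gbin q m l * ((q ^ m.+1)%:R - 1).
Proof.
elim: l => [|l IH]; first by rewrite !gbin0 subn0.
rewrite !gbinS subSS.
transitivity ((gbin q m.+1 l * ((q ^ (m.+1 - l))%:R - 1)) * ((q ^ (m - l))%:R - 1) / ((q ^ l.+1)%:R - 1)).
  by ring.
rewrite IH; by ring.
Qed.

Lemma gbin_ge0 q m l : (0 < q)%N -> 0 <= gbin q m l.
Proof.
move=> hq; elim: l => [|l IH]; first by rewrite gbin0.
rewrite gbinS; apply: mulr_ge0 => //; apply: divr_ge0;
  by rewrite subr_ge0 ler1n expn_gt0 hq.
Qed.

Lemma gbin_gt0 q m l : (1 < q)%N -> (l <= m)%N -> 0 < gbin q m l.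
Proof.
move=> hq; elim: l => [|l IH] hl; first by rewrite gbin0.
rewrite gbinS; apply: mulr_gt0; first by apply: IH; lia.
apply: divr_gt0; rewrite subr_gt0 ltr1n.
- by rewrite -{1}(expn0 q) ltn_exp2l //; lia.
- by rewrite -{1}(expn0 q) ltn_exp2l //; lia.
Qed.

Definition S (T : nat -> rat) n := \sum_(0 <= h < n.+1) (-1) ^+ (n - h) * T h.

Lemma S_rec T n : S T n.+1 = T n.+1 - S T n.
Proof.
rewrite /S big_nat_recr //.
rewrite subnn expr0 mul1r addrC; congr (_ + _).
rewrite -sumrN; apply: eq_big_nat => h /andP [_ hh].
rewrite subSn. by rewrite exprS mulN1r mulNr.
by [].
Qed.

Lemma S_bounds T n : (forall h, (h <= n)%N -> 0 <= T h) ->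
  (forall h, (h < n)%N -> T h <= T h.+1) -> 0 <= S T n /\ S T n <= T n.
Proof.
elim: n => [|n IH] h0 h1.
  by rewrite /S big_nat1 expr0 mul1r; split => //; apply: h0.
have [IH1 IH2] := IH (fun h hh => h0 h (leqW hh)) (fun h hh => h1 h (ltnW hh)).
rewrite S_rec; split.
- rewrite subr_ge0; apply: (le_trans IH2); exact: h1.
- by rewrite lerBlDr lerDl.
Qed.

Lemma S_lower T n : (forall h, (h <= n)%N -> 0 <= T h) ->
  (forall h, (h < n)%N -> T h <= T h.+1) -> (0 < n)%N -> T n - T n.-1 <= S T n.
Proof.
case: n => // n h0 h1 _.
have [_ IH2] := @S_bounds T n (fun h hh => h0 h (leqW hh)) (fun h hh => h1 h (ltnW hh)).
by rewrite S_rec lerB.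
Qed.

Definition Tm q d e j i h : rat :=
  (q ^ (e * h + 'C(j - h, 2)))%:R * gbin q (d - h) (d - j) * gbin q (d - i) h.

Lemma B_S q d e j i : B q d e j i =
  (-1) ^+ (j - minn j (d - i)) * S (Tm q d e j i) (minn j (d - i)).
Proof.
rewrite /B /S mulr_sumr; apply: eq_big_nat => h /andP [_ hh].
rewrite /Tm !mulrA -exprD.
have -> : (j - minn j (d - i) + (minn j (d - i) - h) = j - h)%N by lia.
by [].
Qed.
Lemma mono_scalar (Q Qe Qa Qb Qc Qh : rat) : 3 <= Q -> 1 <= Qa -> 1 <= Qb -> 1 <= Qc -> 1 <= Qh ->
  Qc * Qh <= Q * Qe ->
  Qa * (Qc - 1) * (Qh - 1) <= Qe * (Q * Qa - 1) * (Q * Qb - 1).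
Proof.
move=> h1 h2 h3 h4 h5 h6.
have e0 : 0 <= Qe by nra.
have a1 : Qa * (Qc - 1) * (Qh - 1) <= Qa * (Q * Qe) by nra.
have a2 : 0 <= Qe * ((Q * Qa - 1) - (Q-1)*Qa) by nra.
have a3 : 0 <= Qe * (Q*Qa - 1) * ((Q * Qb - 1) - (Q-1)) by rewrite mulr_ge0 // ?mulr_ge0 //; nra.
have a4 : 0 <= Qe * Qa * ((Q-1)*(Q-1) - Q) by rewrite mulr_ge0 // ?mulr_ge0 //; nra.
nra.
Qed.

Lemma natr_ge1 (q k : nat) : (0 < q)%N -> 1 <= ((q ^ k)%:R : rat).
Proof. by move=> hq; rewrite ler1n expn_gt0 hq. Qed.

Lemma Tm_mono q d e j i h : (2 < q)%N -> (d <= e)%N -> (j <= d)%N ->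
  (h.+1 <= minn j (d - i))%N -> Tm q d e j i h <= Tm q d e j i h.+1.
Proof.
move=> hq hde hjd hh.
set a := (j - h.+1)%N; set b := (d - i - h.+1)%N; set c := (d - h.+1)%N.
have Ej : (j - h = a.+1)%N by rewrite /a; lia.
have Ed : (d - h = c.+1)%N by rewrite /c; lia.
have Edi : (d - i - h = b.+1)%N by rewrite /b; lia.
have Edj : (d - j = c - a)%N by rewrite /a /c; lia.
have Eca : (c.+1 - (c - a) = a.+1)%N by rewrite /a /c; lia.
have Hm := gbinS_m q c (c - a); rewrite Eca in Hm.
have Hl := gbinS_l q (d - i) h (ltnW hq); rewrite Edi in Hl.
rewrite /Tm Ej Ed Edj -/c binS bin1 mulnS.
have -> : (e * h + ('C(a, 2) + a) = (e * h + 'C(a, 2)) + a)%N by lia.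
have -> : (e + e * h + 'C(a, 2) = (e * h + 'C(a, 2)) + e)%N by lia.
rewrite (expnD q (e * h + 'C(a, 2)) a) (expnD q (e * h + 'C(a, 2)) e) !natrM.
set W := ((q ^ (e * h + 'C(a, 2)))%:R : rat).
set g1 := gbin q c.+1 (c - a); set g0 := gbin q c (c - a).
set p0 := gbin q (d - i) h; set p1 := gbin q (d - i) h.+1.
move: Hm Hl; rewrite !expnS !natrM.
set Q := (q%:R : rat).
set Qa := ((q ^ a)%:R : rat); set Qb := ((q ^ b)%:R : rat).
set Qc := ((q ^ c)%:R : rat); set Qh := ((q ^ h)%:R : rat); set Qe := ((q ^ e)%:R : rat).
move=> Hm Hl.
have q0 : (0 < q)%N by lia.
have HQ : 3 <= Q by rewrite /Q ler_nat.
have HQa : 1 <= Qa by exact: natr_ge1. have HQb : 1 <= Qb by exact: natr_ge1.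
have HQc : 1 <= Qc by exact: natr_ge1. have HQh : 1 <= Qh by exact: natr_ge1.
have HQe : 1 <= Qe by exact: natr_ge1.
have W0 : 0 <= W by rewrite /W ler0n.
have g10 : 0 <= g1 by apply: gbin_ge0.
have p00 : 0 <= p0 by apply: gbin_ge0.
have Hce : (Q * Qc) * (Q * Qh) <= Q * Qe.
  have Hn : (expn q (c.+1 + h.+1) <= expn q e.+1)%N.
    rewrite leq_pexp2l //; rewrite /c; lia.
  by move: Hn; rewrite expnD !expnS -(@ler_nat rat) !natrM.
have D0 : 0 < (Q * Qc - 1) * (Q * Qh - 1) by apply: mulr_gt0; nra.
rewrite -(ler_pM2r D0).
have -> : W * Qe * g0 * p1 * ((Q * Qc - 1) * (Q * Qh - 1)) =
   W * Qe * (g0 * (Q * Qc - 1)) * (p1 * (Q * Qh - 1)) by ring.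
rewrite -Hm Hl.
have -> : W * Qe * (g1 * (Q * Qa - 1)) * (p0 * (Q * Qb - 1)) =
   (W * g1 * p0) * (Qe * (Q * Qa - 1) * (Q * Qb - 1)) by ring.
have -> : W * Qa * g1 * p0 * ((Q * Qc - 1) * (Q * Qh - 1)) =
   (W * g1 * p0) * (Qa * (Q * Qc - 1) * (Q * Qh - 1)) by ring.
apply: ler_wpM2l; first by rewrite !mulr_ge0.
apply: mono_scalar => //; nra.
Qed.
Lemma keyB (Q Qe Qm QI QN0 : rat) : 3 <= Q -> 1 <= Qm -> 1 <= QI -> 1 <= QN0 -> QI * QN0 <= Qe ->
  Qm * (QI - 1) * (Q*QN0 + Q - 2) < Qe * (Q-1) * (Q*Qm - 1).
Proof. move=> h1 h2 h3 h4 h5.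
have a1: 0 <= QN0 * (2*Q-2) - (Q*QN0 + Q - 2) by nra.
have a2: 0 <= (Q*Qm - 1) - 2*Qm by nra.
have b1: 0 <= Qm * (QI - 1) by nra.
have b2 := mulr_ge0 b1 a1.
have b3: 0 < Qm * QN0 * (2*Q-2) by rewrite !mulr_gt0 //; lra.
have b4: 0 <= QI * QN0 * (Q-1) by rewrite !mulr_ge0 //; lra.
have b5 := mulr_ge0 b4 a2.
have b6: 0 <= (Qe - QI * QN0) * ((Q-1) * (Q*Qm - 1)) by rewrite mulr_ge0 //; nra.
nra.
Qed.

Lemma caseB q d e j i : (2 < q)%N -> (d <= e)%N -> (j <= d)%N -> (i < d)%N ->
  (d - i <= j)%N ->
  Tm q d e j i.+1 (d - i.+1) < Tm q d e j i (d - i) - Tm q d e j i (d - i.+1).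
Proof.
move=> hq hde hjd hid hj.
set N := (d - i.+1)%N.
set m := (j - N.+1)%N.
have EdiN : (d - i = N.+1)%N by rewrite /N; lia.
have EdN1 : (d - N.+1 = i)%N by rewrite /N; lia.
have EdN : (d - N = i.+1)%N by rewrite /N; lia.
have EjN : (j - N = m.+1)%N by rewrite /m /N; lia.
have EjN1 : (j - N.+1 = m)%N by [].
have Em : (i.+1 - (d - j) = m.+1)%N by rewrite /m /N; lia.
have q1 : (1 < q)%N by lia.
have R1 := gbinS_l q N.+1 N q1.
have R2 := gbinS_m q N N.
have R3 := gbinS_m q i (d - j); rewrite Em in R3.
rewrite subSn // subnn in R1 R2.
rewrite /Tm EdiN EdN1 EdN EjN EjN1 -/N binS bin1 mulnS.
have -> : (e * N + ('C(m, 2) + m) = (e * N + 'C(m, 2)) + m)%N by lia.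
have -> : (e + e * N + 'C(m, 2) = (e * N + 'C(m, 2)) + e)%N by lia.
rewrite (expnD q (e * N + 'C(m, 2)) m) (expnD q (e * N + 'C(m, 2)) e) !natrM.
move: R1 R2 R3; rewrite !expnS !natrM expn0 ?mul1n ?mulr1.
set W := ((q ^ (e * N + 'C(m, 2)))%:R : rat).
set c0 := gbin q N N; set u := gbin q N.+1 N; set c1 := gbin q N.+1 N.+1.
set g := gbin q i (d - j); set g' := gbin q i.+1 (d - j).
set Q := (q%:R : rat).
set Qm := ((q ^ m)%:R : rat); set QN := ((q ^ N)%:R : rat).
set QI := ((q ^ i)%:R : rat); set Qe := ((q ^ e)%:R : rat).
move=> R1 R2 R3.
have q0 : (0 < q)%N by lia.
have HQ : 3 <= Q by rewrite /Q ler_nat.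
have HQm : 1 <= Qm by exact: natr_ge1. have HQN : 1 <= QN by exact: natr_ge1.
have HQI : 1 <= QI by exact: natr_ge1. have HQe : 1 <= Qe by exact: natr_ge1.
have W0 : 0 < W by rewrite /W ltr0n expn_gt0 q0.
have c00 : 0 < c0 by apply: gbin_gt0.
have g0 : 0 < g by apply: gbin_gt0 => //; rewrite /m /N in Em *; lia.
have Hce : (Q * QI) * QN <= Qe.
  have Hn : (expn q (i.+1 + N) <= expn q e)%N.
    rewrite leq_pexp2l //; rewrite /N; lia.
  by move: Hn; rewrite expnD !expnS -(@ler_nat rat) !natrM.
have D0 : 0 < (Q * QN - 1) * (Q * Qm - 1) * (Q - 1) by rewrite !mulr_gt0 //; nra.
rewrite -(ltr_pM2r D0).
have -> : W * Qm * g' * c0 * ((Q * QN - 1) * (Q * Qm - 1) * (Q - 1)) =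
   W * Qm * (g' * (Q * Qm - 1)) * c0 * (Q * QN - 1) * (Q - 1) by ring.
have -> : (W * Qe * g * c1 - W * Qm * g' * u) * ((Q * QN - 1) * (Q * Qm - 1) * (Q - 1)) =
   W * Qe * g * (c1 * (Q * QN - 1)) * (Q * Qm - 1) * (Q - 1)
   - W * Qm * (g' * (Q * Qm - 1)) * (u * (Q - 1)) * (Q * QN - 1) by ring.
rewrite R3 R1 R2.
rewrite -subr_gt0.
have -> : W * Qe * g * (c0 * (Q * QN - 1)) * (Q * Qm - 1) * (Q - 1) -
    W * Qm * (g * (Q * QI - 1)) * (c0 * (Q * QN - 1)) * (Q * QN - 1) -
    W * Qm * (g * (Q * QI - 1)) * c0 * (Q * QN - 1) * (Q - 1) =
    (W * g * c0 * (Q * QN - 1)) *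
    (Qe * (Q - 1) * (Q * Qm - 1) - Qm * (Q * QI - 1) * (Q * QN + Q - 2)) by ring.
apply: mulr_gt0; first by rewrite !mulr_gt0 //; nra.
rewrite subr_gt0; apply: keyB => //; nra.
Qed.

Lemma keyA (Q Qe Qr Qk Qs : rat) : 3 <= Q -> 1 <= Qr -> 1 <= Qk -> 1 <= Qs -> 1 <= Qe ->
  (Q * Qr) * (Q * Qk) <= Q * Qe ->
  (Q * Qr - 1) * (Q * Qk * (Q * Qs) - 1) < Qe * (Q - 1) * (Q * Q * Qs - 1) * (Q * Qs).
Proof.
move=> h1 h2 h3 h4 he h5.
have e0 : 0 <= Qe by lra.
have a1 : (Q * Qr - 1) * (Q * Qk * (Q * Qs) - 1) < (Q * Qr) * (Q * Qk) * (Q * Qs).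
  have t0 : 1 <= Q * Qs by apply: mulr_ege1; lra.
  have t1 : 1 <= Qk * (Q * Qs) by apply: mulr_ege1.
  have p1 : 0 < Q * Qk * (Q * Qs) - 1 by nra.
  have p2 : 0 < Q * Qr by nra.
  have p3 : 0 < (Q * Qr) * (Q * Qk) * (Q * Qs) by rewrite !mulr_gt0 //; lra.
  nra.
have a2 : (Q * Qr) * (Q * Qk) * (Q * Qs) <= Q * Qe * (Q * Qs).
  apply: ler_wpM2r h5; apply: mulr_ge0; lra.
have a3 : 0 <= Qe * (Q * Qs) * ((Q - 1) * (Q * Q * Qs - 1) - Q).
  have t3 : 0 <= (Q * Q) * (Qs - 1) by apply: mulr_ge0; nra.
  have t4 : 3 * Q <= Q * Q by nra.
  have t5 : 0 <= (Q - 1) * (Q * Q * Qs - 1) - Q by nra.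
  rewrite mulr_ge0 // ?mulr_ge0 //; nra.
nra.
Qed.

Lemma caseA q d e j i : (2 < q)%N -> (d <= e)%N -> (1 <= j)%N -> (j < d - i)%N ->
  Tm q d e j i.+1 j < Tm q d e j i j - Tm q d e j i j.-1.
Proof.
move=> hq hde hj hji.
have [k Ek] : exists k, j = k.+1 by exists j.-1; lia.
subst j => /=.
set r := (d - k.+1)%N.
set N := (d - i.+1)%N.
set s := (N - k.+1)%N.
have Edk : (d - k = r.+1)%N by rewrite /r; lia.
have EdiN : (d - i = N.+1)%N by rewrite /N; lia.
have ENk : (N - k = s.+1)%N by rewrite /s /N; lia.
have EN1k : (N.+1 - k = s.+2)%N by rewrite /s /N; lia.
have EN1 : (N.+1 = k.+1 + s.+1)%N by rewrite /s /N; lia.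
have q1 : (1 < q)%N by lia.
have R1 := gbinS_m q r r; rewrite subSn // subnn in R1.
have R2 := gbinS_l q N.+1 k q1; rewrite EN1k in R2.
have R3 := gbinS_m q N k; rewrite EN1k in R3; rewrite [in X in _ = _ * (X%:R - 1)]EN1 expnD in R3.
have R4 := gbinS_l q N k q1; rewrite ENk in R4.
rewrite /Tm EdiN Edk subnn subSn // subnn -/r -/N.
rewrite (bin_small (ltn0Sn 1)) (bin_small (ltnSn 1)) !addn0 mulnS.
rewrite (expnD q e (e * k)) !natrM.
move: R1 R2 R3 R4; rewrite !expnS !natrM expn0 ?mul1n ?mulr1.
set W := ((q ^ (e * k))%:R : rat).
set g := gbin q r r; set u := gbin q r.+1 r.
set A1 := gbin q N.+1 k.+1; set A0 := gbin q N.+1 k.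
set b := gbin q N k; set c1 := gbin q N k.+1.
set Q := (q%:R : rat).
set Qr := ((q ^ r)%:R : rat); set Qk := ((q ^ k)%:R : rat).
set Qs := ((q ^ s)%:R : rat); set Qe := ((q ^ e)%:R : rat).
move=> R1 R2 R3 R4.
have q0 : (0 < q)%N by lia.
have HQ : 3 <= Q by rewrite /Q ler_nat.
have HQr : 1 <= Qr by exact: natr_ge1. have HQk : 1 <= Qk by exact: natr_ge1.
have HQs : 1 <= Qs by exact: natr_ge1. have HQe : 1 <= Qe by exact: natr_ge1.
have W0 : 0 < W by rewrite /W ltr0n expn_gt0 q0.
have g0 : 0 < g by apply: gbin_gt0.
have b0 : 0 < b by apply: gbin_gt0 => //; rewrite /s /N in ENk *; lia.
have Hce : (Q * Qr) * (Q * Qk) <= Q * Qe.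
  have Hn : (expn q (r.+1 + k.+1) <= expn q e.+1)%N.
    rewrite leq_pexp2l //; rewrite /r; lia.
  by move: Hn; rewrite expnD !expnS -(@ler_nat rat) !natrM.
have t0 : 1 <= Q * Qs by apply: mulr_ege1; lra.
have t1 : 1 <= Q * (Q * Qs) by apply: mulr_ege1; lra.
have D0 : 0 < (Q - 1) * (Q * Qk - 1) * (Q * (Q * Qs) - 1).
  rewrite !mulr_gt0 //; nra.
rewrite -(ltr_pM2r D0).
have -> : Qe * W * g * c1 * ((Q - 1) * (Q * Qk - 1) * (Q * (Q * Qs) - 1)) =
   Qe * W * g * (c1 * (Q * Qk - 1)) * (Q - 1) * (Q * (Q * Qs) - 1) by ring.
have -> : (Qe * W * g * A1 - W * u * A0) * ((Q - 1) * (Q * Qk - 1) * (Q * (Q * Qs) - 1)) =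
   Qe * W * g * (A1 * (Q * Qk - 1)) * (Q - 1) * (Q * (Q * Qs) - 1)
   - W * (u * (Q - 1)) * (A0 * (Q * (Q * Qs) - 1)) * (Q * Qk - 1) by ring.
rewrite R4 R2 R1 R3.
rewrite -subr_gt0.
have -> : Qe * W * g * (b * (Q * Qk * (Q * Qs) - 1)) * (Q - 1) * (Q * (Q * Qs) - 1) -
    W * (g * (Q * Qr - 1)) * (b * (Q * Qk * (Q * Qs) - 1)) * (Q * Qk - 1) -
    Qe * W * g * (b * (Q * Qs - 1)) * (Q - 1) * (Q * (Q * Qs) - 1) =
    (W * g * b * (Q * Qk - 1)) *
    (Qe * (Q - 1) * (Q * Q * Qs - 1) * (Q * Qs) - (Q * Qr - 1) * (Q * Qk * (Q * Qs) - 1)) by ring.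
apply: mulr_gt0; first by rewrite !mulr_gt0 //; nra.
rewrite subr_gt0; exact: keyA.
Qed.

Lemma Tm_ge0 q d e j i h : (0 < q)%N -> 0 <= Tm q d e j i h.
Proof. by move=> q0; rewrite /Tm !mulr_ge0 // gbin_ge0. Qed.

Lemma absB q d e j i : (2 < q)%N -> (d <= e)%N -> (j <= d)%N ->
  `|B q d e j i| = S (Tm q d e j i) (minn j (d - i)).
Proof.
move=> hq hde hjd.
rewrite B_S normrM normr_sign mul1r ger0_norm //.
have [] := @S_bounds (Tm q d e j i) (minn j (d - i)) => //.
- by move=> h _; apply: Tm_ge0; lia.
- by move=> h hh; apply: Tm_mono.
Qed.

Theorem theorem4p3 (q d e : nat) :
  prime_power q -> (3 <= q)%N -> (1 <= d)%N -> (d <= e)%N ->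
  forall i j : nat, (i <= d - 1)%N -> (1 <= j)%N -> (j <= d)%N ->
    `|B q d e j i| > `|B q d e j i.+1|.
Proof.
move=> _ hq hd hde i j hi hj hjd.
have hid : (i < d)%N by lia.
rewrite !absB //.
have h0 : forall i' h, (h <= minn j (d - i'))%N -> 0 <= Tm q d e j i' h.
  by move=> i' h _; apply: Tm_ge0; lia.
have h1 : forall i' h, (h < minn j (d - i'))%N -> Tm q d e j i' h <= Tm q d e j i' h.+1.
  by move=> i' h hh; apply: Tm_mono.
have [_ Hup] := @S_bounds (Tm q d e j i.+1) (minn j (d - i.+1)) (h0 i.+1) (h1 i.+1).
have Hlo := @S_lower (Tm q d e j i) (minn j (d - i)) (h0 i) (h1 i).
have Hlo' : Tm q d e j i (minn j (d - i)) - Tm q d e j i (minn j (d - i)).-1 <=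
   S (Tm q d e j i) (minn j (d - i)) by apply: Hlo; lia.
apply: (le_lt_trans Hup); apply: (lt_le_trans _ Hlo').
case: (ltnP j (d - i)) => hji.
- have -> : (minn j (d - i.+1) = j)%N by lia.
  exact: caseA.
- have -> : (minn j (d - i.+1) = d - i.+1)%N by lia.
  have -> : ((d - i).-1 = d - i.+1)%N by lia.
  exact: caseB.
Qed.
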